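(* For every integer $n\ge2$ and every $m\in\{1,2,\dots,n-1\}$, the coefficient of $u^{m}v^{n+1-m}w^{n-1}$ in $P_{n/(n+1)}(u,v,w)$ (i.e. the coefficient at the lattice point $(m,n+1-m)$ of the Newton polygon) equals $4m$.
   Context: Markov polynomials. Let $x,y,z$ be indeterminates. Consider the set consisting of all rationals $\rho\in[0,1]$, each written in lowest terms $\rho=a/b$ with integers $a\ge 0$, $b\ge 1$, together with the formal symbol $1/0$. Define Laurent polynomials $M_\rho(x,y,z)$ recursively by $M_{1/0}=y$, $M_{0/1}=x$, $M_{1/1}=\frac{x^2+y^2}{z}$, and: whenever $a/b$, $c/d$ are in this set with $|ad-bc|=1$ and $(a+2c)/(b+2d)\in[0,1]$, then $M_{\frac{a+2c}{b+2d}}=\big(M_{c/d}^2+M_{\frac{a+c}{b+d}}^2\big)/M_{a/b}$. This determines $M_\rho$ for every rational $\rho\in[0,1]$. Numerator. For coprime $1\le a\le b$, $P_{a/b}(u,v,w)$ denotes the homogeneous polynomial of degree $a+b-1$ such that $M_{a/b}(x,y,z)=P_{a/b}(x^2,y^2,z^2)/(x^{a-1}y^{b-1}z^{a+b-1})$; its existence is known. *)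

(* Defs.v *)
From HB Require Import structures.
From mathcomp Require Import all_boot all_order all_algebra.
From mathcomp Require Import fraction.
From mathcomp Require Import mpoly.
Set Implicit Arguments. Unset Strict Implicit. Unset Printing Implicit Defensive.
Import Order.TTheory GRing.Theory Num.Theory.
Local Open Scope ring_scope.

(* Polynomial ring Q[u,v,w] (also used as Q[x,y,z]); variables indexed 0,1,2. *)
Notation Pol := {mpoly rat[3]}.
(* Field of rational functions Q(x,y,z); it contains the Laurent polynomials. *)
Notation K := {fraction Pol}.

Definition toK (p : Pol) : K := @FracField.tofrac _ p.
Definition var (i : 'I_3) : K := toK 'X_i.
Definition Xv : K := var 0.
Definition Yv : K := var 1.
Definition Zv : K := var 2.

(* Index set: a rational a/b in [0,1] in lowest terms, encoded as the pair
   (a,b) with coprime a b and a <= b, or the formal symbol 1/0 = pair (1,0). *)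
Definition farey_ok (a b : nat) : bool :=
  ((a == 1%N) && (b == 0%N)) || (coprime a b && (a <= b)%N).

Definition farey_adj (a b c d : nat) : bool :=
  (a * d == b * c + 1)%N || (b * c == a * d + 1)%N.

Definition markov_spec (M : nat -> nat -> K) : Prop :=
  [/\ M 1%N 0%N = Yv, M 0%N 1%N = Xv, M 1%N 1%N = (Xv ^+ 2 + Yv ^+ 2) / Zv &
   forall a b c d : nat, farey_ok a b -> farey_ok c d -> farey_adj a b c d ->
     (a + 2 * c <= b + 2 * d)%N ->
     M (a + 2 * c)%N (b + 2 * d)%N
       = (M c d ^+ 2 + M (a + c)%N (b + d)%N ^+ 2) / M a b].

Definition sq_subst (P : Pol) : Pol :=
  P \mPo [tuple 'X_0 ^+ 2; 'X_1 ^+ 2; 'X_2 ^+ 2].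

Definition is_numerator (M : nat -> nat -> K) (a b : nat) (P : Pol) : Prop :=
  P \is (a + b - 1)%N.-homog /\
  M a b = toK (sq_subst P) / (Xv ^+ (a - 1) * Yv ^+ (b - 1) * Zv ^+ (a + b - 1)).

(* Main.v *)
Require Import Defs.
From HB Require Import structures.
From mathcomp Require Import all_boot all_order all_algebra.
From mathcomp Require Import fraction.
From mathcomp Require Import mpoly.
From mathcomp Require Import ring lra zify.
Import Order.TTheory GRing.Theory Num.Theory.
Local Open Scope ring_scope.

Definition mk (a b c : nat) : 'X_{1..3} := [multinom [tuple a; b; c]].

Lemma mkE a b c (i : 'I_3) : mk a b c i = nth 0%N [:: a; b; c] i.
Proof. by rewrite (mnm_nth 0%N). Qed.

Lemma mk_le a b c a' b' c' :
  (mk a b c <= mk a' b' c')%MM = [&& (a <= a')%N, (b <= b')%N & (c <= c')%N].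
Proof.
apply/mnm_lepP/and3P.
- move=> H; split; [exact: (H ord0) | by have := H (inord 1); rewrite !mkE inordK | by have := H (inord 2); rewrite !mkE inordK].
- by case=> h1 h2 h3 [[|[|[|i]]] Hi]; rewrite !mkE.
Qed.

Lemma mk_sub a b c a' b' c' :
  (mk a' b' c' - mk a b c)%MM = mk (a' - a) (b' - b) (c' - c).
Proof. by apply/mnmP => -[[|[|[|i]]] Hi]; rewrite mnmBE !mkE. Qed.

Lemma mk_eq a b c a' b' c' :
  (mk a b c == mk a' b' c') = [&& a == a', b == b' & c == c'].
Proof. by rewrite -val_eqE /= -val_eqE /= !eqseq_cons andbT. Qed.

Lemma Xmk a b c : 'X_[mk a b c] = 'X_0 ^+ a * 'X_1 ^+ b * 'X_2 ^+ c :> Pol.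
Proof.
rewrite mpolyXE_id !big_ord_recr big_ord0 /= mul1r !mkE /=.
by congr (('X_ _ ^+ _) * ('X_ _ ^+ _) * ('X_ _ ^+ _)); apply: val_inj.
Qed.

Lemma mcoeffMX' (p : Pol) m e :
  (p * 'X_[m])@_e = if (m <= e)%MM then p@_(e - m) else 0.
Proof.
case: ifP => H.
  by rewrite -{1}(submK H) addmC mcoeffMX.
apply/eqP; rewrite mcoeff_eq0 (perm_mem (msuppMX _ _)).
apply/mapP => -[m' _ Em]; move: H; rewrite Em lem_addr //.
Qed.

Definition f (n a : nat) : nat :=
  (if a == 0 then 1 else if a < n then 4 * a else if a == n then 3 * n - 1
  else if a == n.+1 then n else 0)%N.
Definition g (n a b : nat) : nat := (if a + b == n.+1 then f n a else 0)%N.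

Ltac splitall :=
  repeat match goal with
  | |- context [if ?c then _ else _] => case: (boolP c) => ?; try (exfalso; lia)
  end.

Fixpoint Q (n : nat) : Pol :=
  match n with
  | 0 => 1
  | 1 => 'X_0 * 'X_2 + ('X_0 + 'X_1) ^+ 2
  | S ((S k) as k1) => ('X_0 + 'X_1) * ('X_2 + 'X_0 + 'X_1) * Q k1
                       - 'X_0 * 'X_1 * 'X_2 ^+ 2 * Q k
  end.

Lemma QS n : Q n.+2 = Q n.+1 * 'X_[mk 2 0 0] + (Q n.+1 * 'X_[mk 1 1 0]) *+ 2
  + Q n.+1 * 'X_[mk 0 2 0] + Q n.+1 * 'X_[mk 1 0 1] + Q n.+1 * 'X_[mk 0 1 1]
  - Q n * 'X_[mk 1 1 2].
Proof. rewrite !Xmk /=; ring. Qed.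

Lemma Q1E : Q 1 = 'X_[mk 1 0 1] + 'X_[mk 2 0 0] + 'X_[mk 1 1 0] *+ 2 + 'X_[mk 0 2 0].
Proof. rewrite !Xmk /=; ring. Qed.

Lemma ifR (c : bool) (x : nat) : (if c then x%:R else 0 :> rat) = (if c then x else 0)%:R.
Proof. by case: c. Qed.

Lemma bR (c : bool) : (c%:R : rat) = (c : nat)%:R.
Proof. by []. Qed.

Lemma QcoefS n a b c : (Q n.+2)@_(mk a b c) =
  (if (2 <= a)%N then (Q n.+1)@_(mk (a - 2) b c) else 0)
  + (if ((1 <= a) && (1 <= b))%N then (Q n.+1)@_(mk (a - 1) (b - 1) c) else 0) *+ 2
  + (if (2 <= b)%N then (Q n.+1)@_(mk a (b - 2) c) else 0)
  + (if ((1 <= a) && (1 <= c))%N then (Q n.+1)@_(mk (a - 1) b (c - 1)) else 0)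
  + (if ((1 <= b) && (1 <= c))%N then (Q n.+1)@_(mk a (b - 1) (c - 1)) else 0)
  - (if ([&& 1 <= a, 1 <= b & 2 <= c])%N then (Q n)@_(mk (a - 1) (b - 1) (c - 2)) else 0).
Proof.
rewrite QS !mcoeffB !mcoeffD ?mcoeffMn !mcoeffMX' !mk_le !mk_sub !leq0n !subn0.
by rewrite ?andbT -?mulr2n.
Qed.

Definition Inv n := (forall a b c, (n < c)%N -> (Q n)@_(mk a b c) = 0)
 /\ (forall a b, (Q n)@_(mk a b n) = ((a == n) && (b == 0%N) : nat)%:R)
 /\ (forall a b, (0 < n)%N -> (Q n)@_(mk a b n.-1) = (g n a b)%:R).

Ltac natify :=
  rewrite ?if_same ?ifR ?mulr2n ?add0r ?addr0 -?natrD; apply/eqP; rewrite ?eqr_nat; apply/eqP.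

Lemma Inv0 : Inv 0.
Proof.
have E : Q 0 = 'X_[mk 0 0 0] by rewrite Xmk !expr0 !mulr1.
rewrite /Inv E; split; [|split] => a b.
- move=> c Hc; rewrite mcoeffX mk_eq -[0 : rat]/((0%N)%:R); natify; splitall; lia.
- rewrite mcoeffX mk_eq; natify; splitall; lia.
- by [].
Qed.

Lemma Inv1 : Inv 1.
Proof.
rewrite /Inv Q1E; split; [|split] => a b.
- move=> c Hc; rewrite !mulr2n !mcoeffD !mcoeffX !mk_eq.
  rewrite -[0 : rat]/((0%N)%:R); natify. splitall; lia.
- rewrite !mulr2n !mcoeffD !mcoeffX !mk_eq; natify; splitall; lia.
- move=> _; rewrite !mulr2n !mcoeffD !mcoeffX !mk_eq /g /f; natify; splitall; lia.
Qed.

Lemma InvS n : Inv n -> Inv n.+1 -> Inv n.+2.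
Proof.
move=> [H0 [H1 H2]] [H0' [H1' H2']].
split; [|split].
- move=> a b c Hc; rewrite QcoefS.
  rewrite !H0' ?H0; try lia.
  rewrite !if_same; ring.
- move=> a b; rewrite QcoefS.
  rewrite !(H0' _ _ n.+2) //.
  rewrite (_ : (n.+2 - 1 = n.+1)%N) // (_ : (n.+2 - 2 = n)%N) ?subSS ?subn0 //.
  rewrite !H1' !H1.
  apply/eqP; rewrite subr_eq; apply/eqP.
  natify. splitall; lia.
- move=> a b _; rewrite QcoefS /=.
  have -> : (if [&& (1 <= a)%N, (1 <= b)%N & (2 <= n.+1)%N]
      then (Q n)@_(mk (a - 1) (b - 1) (n.+1 - 2)) else 0)
      = (if [&& (1 <= a)%N, (1 <= b)%N & (2 <= n.+1)%N]
      then (g n (a - 1) (b - 1))%:R else 0).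
    case: ifP => // /and3P [_ _ hn].
    rewrite (_ : (n.+1 - 2 = n.-1)%N); last by lia.
    apply: H2; lia.
  rewrite (_ : (n.+1 - 1 = n)%N); last by lia.
  rewrite !H1' (H2' _ _ (ltn0Sn n)) (H2' _ _ (ltn0Sn n)) /=.
  apply/eqP; rewrite subr_eq; apply/eqP.
  natify. rewrite /g /f. splitall; lia.
Qed.

Lemma InvAll n : Inv n /\ Inv n.+1.
Proof.
elim: n => [|n [I1 I2]]; first by split; [exact: Inv0 | exact: Inv1].
by split => //; exact: InvS.
Qed.


Lemma mk_eta (m : 'X_{1..3}) : m = mk (m ord0) (m (inord 1)) (m (inord 2)).
Proof.
apply/mnmP => -[[|[|[|i]]] Hi] //; rewrite mkE /=; congr (m _); apply: val_inj => //=;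
  by rewrite inordK.
Qed.

Lemma sqX (m : 'X_{1..3}) :
  sq_subst 'X_[m] = 'X_[mk (m ord0 * 2) (m (inord 1) * 2) (m (inord 2) * 2)].
Proof.
rewrite /sq_subst comp_mpolyX Xmk !big_ord_recr big_ord0 /= mul1r !exprM.
rewrite !(tnth_nth 0) /=.
rewrite -!exprM; congr (_ * _ * _); congr (_ ^+ _); rewrite mulnC; do 2 f_equal; apply: val_inj; by rewrite /= ?inordK.
Qed.

Lemma sq_coef (p : Pol) a b c :
  (sq_subst p)@_(mk (a * 2) (b * 2) (c * 2)) = p@_(mk a b c).
Proof.
rewrite /sq_subst comp_mpolyEX {3}[p]mpolyE !raddf_sum /=.
apply: eq_bigr => m _; rewrite !mcoeffZ -/(sq_subst _) sqX !mcoeffX mk_eq.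
congr (_ * (_ : bool)%:R); rewrite [in RHS](mk_eta m) mk_eq !eqn_mul2r /=.
done.
Qed.

Lemma Xi_neq0 (i : 'I_3) : ('X_i : Pol) != 0.
Proof.
apply/negP => /eqP H.
have := @mcoeffXU 3 rat i i; rewrite H mcoeff0 eqxx => /eqP.
by rewrite eq_sym oner_eq0.
Qed.

Lemma var_neq0 i : var i != 0.
Proof. by rewrite /var /toK tofrac_eq0 Xi_neq0. Qed.

Definition qK n : K := toK (sq_subst (Q n)).

Lemma Q_neq0 n : Q n != 0.
Proof.
apply/negP => /eqP H.
have [[_ [H1 _]] _] := InvAll n.
by have := H1 n 0%N; rewrite H mcoeff0 !eqxx /= => /eqP; rewrite eq_sym oner_eq0.
Qed.

Lemma qK_neq0 n : qK n != 0.
Proof.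
rewrite /qK /toK tofrac_eq0; apply/negP => /eqP H.
have := sq_coef (Q n) n 0 n; rewrite H mcoeff0 => /esym /eqP.
have [[_ [H1 _]] _] := InvAll n.
by rewrite H1 !eqxx /= oner_eq0.
Qed.

Lemma phiX (i : 'I_3) : toK (sq_subst 'X_i) = var i ^+ 2.
Proof.
rewrite /sq_subst comp_mpolyXU /var /toK -tofracXn.
by case: i => -[|[|[|i]]] Hi //; congr (tofrac ('X_ _ ^+ 2)); apply: val_inj.
Qed.

Lemma Cassini n : Q n.+2 * Q n - Q n.+1 ^+ 2
  = ('X_0 + 'X_1) ^+ 2 * 'X_1 * 'X_2 * ('X_0 * 'X_1 * 'X_2 ^+ 2) ^+ n.
Proof.
elim: n => [|n IH]; first by rewrite /=; ring.
transitivity (('X_0 * 'X_1 * 'X_2 ^+ 2) * (Q n.+2 * Q n - Q n.+1 ^+ 2)); last by rewrite IH (exprS _ n); ring.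
have -> : Q n.+3 = ('X_0 + 'X_1) * ('X_2 + 'X_0 + 'X_1) * Q n.+2
                       - 'X_0 * 'X_1 * 'X_2 ^+ 2 * Q n.+1 by [].
have -> : Q n.+2 = ('X_0 + 'X_1) * ('X_2 + 'X_0 + 'X_1) * Q n.+1
                       - 'X_0 * 'X_1 * 'X_2 ^+ 2 * Q n by [].
ring.
Qed.

Definition phi (p : Pol) : K := toK (sq_subst p).
Lemma phiD p q : phi (p + q) = phi p + phi q.
Proof. by rewrite /phi /sq_subst /toK rmorphD tofracD. Qed.
Lemma phiB p q : phi (p - q) = phi p - phi q.
Proof. by rewrite /phi /sq_subst /toK rmorphB tofracB. Qed.
Lemma phiM p q : phi (p * q) = phi p * phi q.
Proof. by rewrite /phi /sq_subst /toK rmorphM tofracM. Qed.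
Lemma phiXn p k : phi (p ^+ k) = phi p ^+ k.
Proof. by rewrite /phi /sq_subst /toK rmorphXn tofracXn. Qed.
Lemma phi1 : phi 1 = 1.
Proof. by rewrite /phi /sq_subst /toK rmorph1 tofrac1. Qed.
Lemma phiXi i : phi 'X_i = var i ^+ 2.
Proof. exact: phiX. Qed.

Lemma qK0 : qK 0 = 1.
Proof. exact: phi1. Qed.

Lemma qK1 : qK 1 = Xv ^+ 2 * Zv ^+ 2 + (Xv ^+ 2 + Yv ^+ 2) ^+ 2.
Proof. by rewrite /qK -/(phi _) /= !(phiD, phiM, phiXn, phiXi). Qed.

Lemma CassK n : qK n.+2 * qK n - qK n.+1 ^+ 2
  = (Xv ^+ 2 + Yv ^+ 2) ^+ 2 * Yv ^+ 2 * Zv ^+ 2 * ((Xv * Yv * Zv ^+ 2) ^+ n) ^+ 2.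
Proof.
rewrite /qK -!/(phi _) -phiXn -phiM -phiB Cassini !(phiD, phiM, phiXn, phiXi).
rewrite -!exprM mulnC !exprM. rewrite /Xv /Yv /Zv. congr (_ * _ ^+ n). ring.
Qed.

Definition dK : K := Xv * Yv * Zv ^+ 2.
Definition T n : K := qK n * Xv / dK ^+ n.

Lemma Xv0 : Xv != 0. Proof. exact: var_neq0. Qed.
Lemma Yv0 : Yv != 0. Proof. exact: var_neq0. Qed.
Lemma Zv0 : Zv != 0. Proof. exact: var_neq0. Qed.
Lemma dK0 : dK != 0.
Proof.
rewrite /dK; apply: mulf_neq0; [apply: mulf_neq0|apply: expf_neq0]; [exact: Xv0|exact: Yv0|exact: Zv0].
Qed.



Lemma alg_base (F : fieldType) (x y z : F) : x != 0 -> y != 0 -> z != 0 ->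
  (x ^+ 2 + ((x ^+ 2 + y ^+ 2) / z) ^+ 2) / y
  = (x ^+ 2 * z ^+ 2 + (x ^+ 2 + y ^+ 2) ^+ 2) * x / (x * y * z ^+ 2).
Proof. move=> hx hy hz; field. by rewrite hx hy hz. Qed.

Lemma alg_q (F : fieldType) (a b c : F) : c != 0 -> a = (b ^+ 2 + (a * c - b ^+ 2)) / c.
Proof. move=> hc; field. done. Qed.

Lemma alg_step (F : fieldType) (x y z E q0 q1 : F) :
  x != 0 -> y != 0 -> z != 0 -> E != 0 -> q0 != 0 ->
  (q1 ^+ 2 + (x ^+ 2 + y ^+ 2) ^+ 2 * y ^+ 2 * z ^+ 2 * E ^+ 2) / q0 * x
     / (E * (x * y * z ^+ 2) * (x * y * z ^+ 2))
  = (((x ^+ 2 + y ^+ 2) / z) ^+ 2 + (q1 * x / (E * (x * y * z ^+ 2))) ^+ 2)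
     / (q0 * x / E).
Proof. move=> hx hy hz hE hq; field. by rewrite hx hy hz hE hq. Qed.

Lemma MT (M : nat -> nat -> K) (HM : markov_spec M) n :
  M n n.+1 = T n /\ M n.+1 n.+2 = T n.+1.
Proof.
case: HM => H10 H01 H11 Hrec.
have hX := Xv0; have hY := Yv0; have hZ := Zv0.
elim: n => [|n [IH1 IH2]].
  split; first by rewrite H01 /T qK0 expr0 mul1r divr1.
  have := Hrec 1%N 0%N 0%N 1%N isT isT isT isT; rewrite /= => ->.
  rewrite H01 H11 H10 /T qK1 expr1 /dK. by rewrite (@alg_base K _ _ _ hX hY hZ).
split => //.
have h1 : farey_ok n n.+1 by rewrite /farey_ok coprimenS leqnSn orbT.
have h2 : farey_adj n n.+1 1 1 by rewrite /farey_adj; apply/orP; right; apply/eqP; lia.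
have h3 : (n + 2 * 1 <= n.+1 + 2 * 1)%N by lia.
have := Hrec n n.+1 1%N 1%N h1 isT h2 h3.
have E1 : (n + 2 * 1 = n.+2)%N by lia.
have E2 : (n.+1 + 2 * 1 = n.+3)%N by lia.
have E3 : (n + 1 = n.+1)%N by lia.
have E4 : (n.+1 + 1 = n.+2)%N by lia.
rewrite E2 E1 E4 E3.
move=> ->; rewrite IH1 IH2 H11.
have hq := qK_neq0 n.
have hE : dK ^+ n != 0 := expf_neq0 _ dK0.
rewrite /T (@alg_q K (qK n.+2) (qK n.+1) _ hq) CassK (exprSr dK n.+1) (exprSr dK n) -/dK.
move: hE; rewrite /dK => hE.
by rewrite (@alg_step K _ _ _ _ _ (qK n.+1) hX hY hZ hE hq).
Qed.


Lemma alg_fin (F : fieldType) (x D A B : F) : x != 0 -> D != 0 ->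
  A / D = B * x / (x * D) -> A = B.
Proof.
move=> hx hD H.
have E : B * x / (x * D) = B / D by field; rewrite hx hD.
rewrite E in H; exact: (mulIf (invr_neq0 hD)).
Qed.

Theorem theorem9p2 (M : nat -> nat -> K) (HM : markov_spec M)
  (n : nat) (Hn : (2 <= n)%N) (P : Pol) (HP : is_numerator M n n.+1 P)
  (m : nat) (Hm1 : (1 <= m)%N) (Hm2 : (m <= n - 1)%N) :
  P@_[multinom [tuple m; (n + 1 - m)%N; (n - 1)%N]] = (4 * m)%:R.
Proof.
case: HP => _ HP.
have [HT _] := @MT M HM n.
rewrite HT /T in HP.
have Hsq : toK (sq_subst P) = qK n.
  clear HT; case: n Hn Hm2 HP => [|k] // Hn Hm2 HP.
  have hD : Xv ^+ (k.+1 - 1) * Yv ^+ (k.+2 - 1) * Zv ^+ (k.+1 + k.+2 - 1) != 0.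
    by apply: mulf_neq0; [apply: mulf_neq0|]; apply: expf_neq0; [exact: Xv0|exact: Yv0|exact: Zv0].
  apply: (@alg_fin K Xv _ _ _ Xv0 hD).
  rewrite -HP; congr (_ / _).
  rewrite /dK !exprMn.
  have -> : (k.+1 - 1 = k)%N by lia.
  have -> : (k.+2 - 1 = k.+1)%N by lia.
  have -> : (k.+1 + k.+2 - 1 = k.+1 + k.+1)%N by lia.
  by rewrite exprD (exprS Xv k) !mulrA.
have Hsq2 : sq_subst P = sq_subst (Q n).
  by move: Hsq; rewrite /qK /toK => /eqP; rewrite tofrac_eq => /eqP.
change (P@_(mk m (n + 1 - m) (n - 1)) = (4 * m)%:R).
rewrite -sq_coef Hsq2 sq_coef.
have [[_ [_ H2]] _] := InvAll n.
rewrite (_ : (n - 1 = n.-1)%N); last by lia.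
rewrite H2; last by lia.
congr (_%:R); rewrite /g /f; splitall; lia.
Qed.
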